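(* Let $\Gamma$ be the graph with vertex set $\{v_{n,k}: n\in\mathbb Z,\ k\in\mathbb Z/10\mathbb Z\}$ and edge set $\{v_{n,k}v_{n,k+1}\}\cup\{v_{n,2k+1}v_{n+1,4k+2}\}$ ($n\in\mathbb Z$, $k\in\mathbb Z/10\mathbb Z$), and for $n\in\mathbb Z$ let $L_n=\{v_{n,k}: k\in\mathbb Z/10\mathbb Z\}$. Then every automorphism $\phi$ of $\Gamma$ preserves the partition $\{L_n: n\in\mathbb Z\}$, i.e. for every $n$ there is $m$ with $\phi(L_n)=L_m$.
   Context: Indices $k$ are taken modulo 10. *)

(* Defs.v *)
From HB Require Import structures.
From mathcomp Require Import all_boot all_order all_algebra.
Set Implicit Arguments. Unset Strict Implicit. Unset Printing Implicit Defensive.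
Import Order.TTheory GRing.Theory Num.Theory.
Local Open Scope ring_scope.

Definition vtx := (int * 'Z_10)%type.

Definition gen_edge (x y : vtx) : Prop :=
  (y.1 = x.1 /\ y.2 = x.2 + 1) \/
  (exists k : 'Z_10, y.1 = x.1 + 1 /\ x.2 = 2 * k + 1 /\ y.2 = 4 * k + 2).

Definition Gamma_adj (x y : vtx) : Prop := gen_edge x y \/ gen_edge y x.

Definition Gamma_aut (phi : vtx -> vtx) : Prop :=
  bijective phi /\ forall x y, Gamma_adj x y <-> Gamma_adj (phi x) (phi y).

Definition layer (n : int) (x : vtx) : Prop := x.1 = n.

(* Main.v *)
Require Import Defs.
From mathcomp Require Import all_boot all_order all_algebra.
Local Open Scope ring_scope.
Import GRing.Theory.

Definition dn (a : 'Z_10) := [seq j <- [:: 1; 3; 5; 7; 9] | 2 * j == a].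
Arguments dn : simpl never.
Definition nbrs (x : vtx) : seq vtx :=
  [:: (x.1, x.2 + 1); (x.1, x.2 - 1)] ++
  (if odd (val x.2) then [:: (x.1 + 1, 2 * x.2)]
   else [seq (x.1 - 1, j) | j <- dn x.2]).

Arguments nbrs : simpl never.
Definition adjb (x y : vtx) := y \in nbrs x.

Fixpoint walks (v : vtx) (m : nat) : seq (seq vtx) :=
  if m is m'.+1 then flatten [seq [seq w :: p | p <- walks w m'] | w <- nbrs v]
  else [:: [::]].

Definition cycb (x y : vtx) (s : seq vtx) :=
  [&& size s == 6%N, path adjb y s, adjb (last y s) x & uniq (x :: y :: s)].

Fixpoint swalks (v : vtx) (m : nat) (seen : seq vtx) : seq (seq vtx) :=
  if m is m'.+1 then flatten [seq [seq w :: p | p <- swalks w m' (w :: seen)] | w <- nbrs v & w \notin seen]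
  else [:: [::]].
Definition cyc8 x y := undup (filter (cycb x y) (swalks y 6 [:: x; y])).

Definition Z10s : seq 'Z_10 := [seq inZp i | i <- iota 0 10].



Lemma chk : all (fun a : 'Z_10 => all (fun y => size (cyc8 (0, a) y) == if y.1 == 0 then 6%N else 4%N) (nbrs (0,a))) Z10s.
Proof. vm_compute. reflexivity. Qed.

Lemma inZ10s (k : 'Z_10) : k \in Z10s.
Proof.
rewrite /Z10s -(valZpK k); apply: map_f; rewrite mem_iota /=.
exact: (ltn_ord k).
Qed.

Lemma allZ (P : pred 'Z_10) : all P Z10s -> forall k, P k.
Proof. by move=> /allP H k; apply: H; apply: inZ10s. Qed.

Definition wit (a : 'Z_10) : 'Z_10 := inZp (val a).-1./2.

Lemma F1 (k : 'Z_10) : odd (val (2*k+1)) && (4*k+2 == 2*(2*k+1)).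
Proof. by move: k; apply: allZ; vm_compute. Qed.

Lemma F2 (k : 'Z_10) : ~~ odd (val (4*k+2)) && (2*k+1 \in [:: 1; 3; 5; 7; 9]) && (2*(2*k+1) == 4*k+2).
Proof. by move: k; apply: allZ; vm_compute. Qed.

Lemma G1 (a : 'Z_10) : odd (val a) ==> (a == 2 * wit a + 1) && (2 * a == 4 * wit a + 2).
Proof. by move: a; apply: allZ; vm_compute. Qed.

Lemma G2 (a j : 'Z_10) : (j \in [:: 1; 3; 5; 7; 9]) ==> (2 * j == a) ==> (j == 2 * wit j + 1) && (a == 4 * wit j + 2).
Proof.
have H : all (fun a : 'Z_10 => all (fun j : 'Z_10 => (j \in [:: 1; 3; 5; 7; 9]) ==> (2 * j == a) ==> (j == 2 * wit j + 1) && (a == 4 * wit j + 2)) Z10s) Z10s by vm_compute.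
by move: H => /allP /(_ a (inZ10s a)) /allP /(_ j (inZ10s j)).
Qed.

Lemma adjP (x y : vtx) : Gamma_adj x y <-> adjb x y.
Proof.
case: x => n a; case: y => m b; rewrite /Gamma_adj /gen_edge /adjb /nbrs /=.
split.
- case=> [[[-> ->]|[k [-> [ea eb]]]]|[[-> ea]|[k [en [eb ea]]]]].
  + by rewrite in_cons eqxx.
  + have /andP [oa e2] := F1 k. rewrite -ea in oa e2.
    by rewrite oa !in_cons eb (eqP e2) eqxx !orbT.
  + by rewrite ea addrK !in_cons eqxx orbT.
  + have /andP [/andP [oa hin] e2] := F2 k. rewrite -ea in oa e2. rewrite -eb in hin e2.
    rewrite (negbTE oa) !in_cons; apply/orP; right; apply/orP; right; apply/mapP; exists b.
      by rewrite /dn mem_filter e2.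
    by rewrite en addrK.
- rewrite !in_cons => /or3P [/eqP [-> ->]|/eqP [-> ->]|].
  + by left; left.
  + by right; left; rewrite subrK.
  case: ifP => oa.
  + rewrite in_cons in_nil orbF => /eqP [-> ->].
    have /implyP /(_ oa) /andP [/eqP e1 /eqP e2] := G1 a.
    by left; right; exists (wit a).
  + move=> /mapP [j]; rewrite /dn mem_filter => /andP [e hj] [-> ->].
    have /implyP /(_ hj) /implyP /(_ e) /andP [/eqP e1 /eqP e2] := G2 a j.
    by right; right; exists (wit j); rewrite subrK.
Qed.

Lemma swalksP (s : seq vtx) v seen : path adjb v s -> uniq s ->
  all (fun w => w \notin seen) s -> s \in swalks v (size s) seen.
Proof.
elim: s v seen => [|w s IH] v seen; first by rewrite mem_head.
move=> /andP [hvw hp] /andP [hws hu] /andP [hwn ha].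
change (w :: s \in flatten [seq [seq w' :: p | p <- swalks w' (size s) (w' :: seen)] | w' <- [seq w' <- nbrs v | w' \notin seen]]).
apply/flatten_mapP; exists w; first by rewrite mem_filter hwn.
apply: map_f; apply: IH => //.
apply/allP => z hz /=; rewrite in_cons negb_or (allP ha z hz) andbT.
by apply/eqP => ez; rewrite -ez hz in hws.
Qed.

Lemma memCyc x y s : (s \in cyc8 x y) = cycb x y s.
Proof.
rewrite /cyc8 mem_undup mem_filter.
rewrite andbC; case hc: (cycb x y s); rewrite ?andbF ?andbT //.
move: hc => /and4P [/eqP hs hp _ hu].
suff : s \in swalks y (size s) [:: x; y] by rewrite hs.
apply: swalksP => //.
  by move: hu => /= /andP [_ /andP [_ ->]].
apply/allP => z hz; rewrite !in_cons in_nil orbF.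
move: hu => /= /andP [hx /andP [hy _]].
apply/negP => /orP [] /eqP ez; subst z.
  by rewrite in_cons hz orbT in hx.
by rewrite hz in hy.
Qed.

Section Transfer.
Variable f : vtx -> vtx.
Hypothesis finj : injective f.
Hypothesis fadj : forall a b, adjb (f a) (f b) = adjb a b.

Lemma cycb_map x y s : cycb (f x) (f y) (map f s) = cycb x y s.
Proof.
rewrite /cycb size_map path_map last_map fadj.
rewrite (eq_path (e' := adjb)); last by move=> a b /=; rewrite fadj.
have -> : [:: f x, f y & map f s] = map f [:: x, y & s] by [].
by rewrite (map_inj_uniq finj).
Qed.

Lemma cyc_le x y : (size (cyc8 x y) <= size (cyc8 (f x) (f y)))%N.
Proof.
rewrite -(size_map (map f)); apply: uniq_leq_size.
  by rewrite (map_inj_uniq (inj_map finj)) undup_uniq.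
by move=> t /mapP [s hs ->]; rewrite memCyc cycb_map -memCyc.
Qed.
End Transfer.

Definition sh (c : int) (v : vtx) : vtx := (v.1 + c, v.2).

Lemma sh_inj c : injective (sh c).
Proof. by move=> [a b] [a' b'] [/addIr -> ->]. Qed.

Lemma nbrs_sh c a : nbrs (sh c a) = map (sh c) (nbrs a).
Proof.
rewrite /nbrs /=; congr (_ :: _ :: _).
case: ifP => _; first by rewrite /= /sh /= addrAC.
by rewrite -map_comp; apply: eq_map => j /=; rewrite addrAC.
Qed.

Lemma adj_sh c a b : adjb (sh c a) (sh c b) = adjb a b.
Proof. by rewrite /adjb nbrs_sh mem_map //; apply: sh_inj. Qed.

Lemma count_cyc x y : adjb x y -> size (cyc8 x y) = if x.1 == y.1 then 6%N else 4%N.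
Proof.
move=> hxy.
have e : size (cyc8 x y) = size (cyc8 (sh (- x.1) x) (sh (- x.1) y)).
  apply/eqP; rewrite eqn_leq (@cyc_le (sh (- x.1)) (@sh_inj _) (@adj_sh _)) /=.
  have K v : sh (- - x.1) (sh (- x.1) v) = v by case: v => p q; rewrite /sh /= opprK subrK.
  by have := @cyc_le (sh (- - x.1)) (@sh_inj _) (@adj_sh _) (sh (- x.1) x) (sh (- x.1) y); rewrite !K.
have hx : sh (- x.1) x = (0, x.2) by rewrite /sh subrr.
have hy : (x.1 == y.1) = ((sh (- x.1) y).1 == 0).
  by rewrite /sh /= subr_eq0 eq_sym.
have hn : sh (- x.1) y \in nbrs (0, x.2) by rewrite -hx; rewrite -/(adjb _ _) adj_sh.
rewrite e hx hy.
have := @allZ _ chk (x.2) => /allP /(_ _ hn) /eqP.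
by [].
Qed.

Section Layer.
Variable f : vtx -> vtx.
Hypothesis finj : injective f.
Hypothesis fadj : forall a b, adjb (f a) (f b) = adjb a b.

Lemma layer_edge x y : adjb x y -> x.1 = y.1 -> (f x).1 = (f y).1.
Proof.
move=> hxy e.
have := @cyc_le f finj fadj x y.
rewrite (@count_cyc x y hxy) e eqxx (@count_cyc (f x) (f y) (etrans (fadj _ _) hxy)).
by case: eqP.
Qed.

Lemma layer_const n (k : 'Z_10) : (f (n, k)).1 = (f (n, 0)).1.
Proof.
rewrite -(natr_Zp k); elim: (nat_of_ord k) => [//|i IH].
have -> : i.+1%:R = i%:R + 1 :> 'Z_10 by rewrite natr1.
rewrite -IH; symmetry; apply: layer_edge => //.
by rewrite /adjb /nbrs in_cons eqxx.
Qed.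
End Layer.

Theorem mainTheorem4 (phi : vtx -> vtx) (hphi : Gamma_aut phi) :
  forall n : int, exists m : int,
    (forall x, layer n x -> layer m (phi x)) /\
    (forall y, layer m y -> exists x, layer n x /\ phi x = y).
Proof.
move: hphi => [[g hgf hfg] hadj] n.
have padj a b : adjb (phi a) (phi b) = adjb a b.
  apply/idP/idP => h.
    by apply/adjP; apply/(hadj a b); apply/adjP.
  by apply/adjP; apply/(hadj a b); apply/adjP.
have ginj : injective g by apply: (can_inj hfg).
have gadj a b : adjb (g a) (g b) = adjb a b by rewrite -padj !hfg.
exists (phi (n, 0)).1; split.
  move=> [p k]; rewrite /layer /= => hp; rewrite hp.
  exact: (@layer_const phi (can_inj hgf) padj n k).
move=> [p k]; rewrite /layer /= => hp; exists (g (p, k)); split; last exact: hfg.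
rewrite (@layer_const g ginj gadj) hp -(@layer_const g ginj gadj _ (phi (n, 0)).2).
by rewrite -surjective_pairing hgf.
Qed.
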